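(* Let $\mathscr D:\mathscr N=\mathscr N_1\cup\cdots\cup\mathscr N_k$ be a pairwise binary-sized decomposition of a chemical reaction network $\mathscr N$ with set of common complexes $\mathscr C_{\mathscr D}$. If $y'-x_1-\cdots-x_q-y''$ is a path in $\mathscr N$ such that $y',y''\in\mathscr C_{\mathscr D}$ while $x_1,\dots,x_q\notin\mathscr C_{\mathscr D}$, then there is a subnetwork $\mathscr N_i$ in which $y'$ and $y''$ are connected.
   Context: A CRN $\mathscr N=(\mathscr S,\mathscr C,\mathscr R)$ is viewed as a directed graph with vertex set the complexes $\mathscr C$ and arcs the reactions $\mathscr R$. A path is a path in the underlying undirected graph (consecutive complexes joined by a reaction in either direction); two complexes are connected in a network if a path in that network joins them. A decomposition $\mathscr N=\mathscr N_1\cup\cdots\cup\mathscr N_k$ is given by a partition $\{\mathscr R_1,\dots,\mathscr R_k\}$ of $\mathscr R$, $k\ge2$; the subnetwork $\mathscr N_i$ has reaction set $\mathscr R_i$ and complex set $\mathscr C_i$ consisting of the complexes occurring in reactions of $\mathscr R_i$. The set $\mathscr C_{\mathscr D}$ of common complexes consists of all complexes lying in the complex sets of at least two distinct subnetworks; $d=|\mathscr C_{\mathscr D}|$. The decomposition is pairwise binary-sized (PBS) if there are integers $0\le b\le c\le d$ such that $|\mathscr C_i\cap\mathscr C_j|\in\{b,c\}$ for all $i\neq j$. *)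

(* Defs.v *)
From mathcomp Require Import all_boot.
Set Implicit Arguments. Unset Strict Implicit. Unset Printing Implicit Defensive.

(* A CRN is modelled by its reaction graph: complexes form a finite type C,
   reactions are a finite set of ordered pairs (reactant, product).
   Species play no role in the statement. *)

Section CRN.
Variable C : finType.

Definition adj (S : {set C * C}) : rel C :=
  fun x y => ((x, y) \in S) || ((y, x) \in S).

Definition cplx (S : {set C * C}) : {set C} :=
  [set x | [exists r in S, (r.1 == x) || (r.2 == x)]].

Variables (R : {set C * C}) (k : nat) (part : C * C -> 'I_k).

Definition Rsub (i : 'I_k) : {set C * C} := [set r in R | part r == i].

Definition Csub (i : 'I_k) : {set C} := cplx (Rsub i).

Definition is_decomposition : Prop :=
  (2 <= k) /\ (forall i : 'I_k, Rsub i != set0).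

Definition common : {set C} :=
  [set x | [exists i : 'I_k, exists j : 'I_k,
      [&& i != j, x \in Csub i & x \in Csub j]]].

Definition PBS : Prop :=
  exists b c : nat, b <= c <= #|common| /\
    forall i j : 'I_k, i != j -> #|Csub i :&: Csub j| \in [:: b; c].

End CRN.

(* Main.v *)
Require Import Defs.
From mathcomp Require Import all_boot.

Lemma edge_sub (C : finType) (R : {set C * C}) (k : nat) (part : C * C -> 'I_k) a b :
  adj R a b -> exists j, [/\ adj (Rsub R part j) a b, a \in Csub R part j & b \in Csub R part j].
Proof.
rewrite /adj => /orP [] h.
- exists (part (a, b)); split.
  + by rewrite /Rsub !inE /= ?h ?eqxx ?orbT.
  + rewrite /Csub /cplx inE; apply/existsP; exists (a, b).
    by rewrite /Rsub !inE /= ?h ?eqxx ?orbT.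
  + rewrite /Csub /cplx inE; apply/existsP; exists (a, b).
    by rewrite /Rsub !inE /= ?h ?eqxx ?orbT.
- exists (part (b, a)); split.
  + by rewrite /Rsub !inE /= ?h ?eqxx ?orbT.
  + rewrite /Csub /cplx inE; apply/existsP; exists (b, a).
    by rewrite /Rsub !inE /= ?h ?eqxx ?orbT.
  + rewrite /Csub /cplx inE; apply/existsP; exists (b, a).
    by rewrite /Rsub !inE /= ?h ?eqxx ?orbT.
Qed.

Lemma noncommon_eq (C : finType) (R : {set C * C}) (k : nat) (part : C * C -> 'I_k) x i j :
  x \notin common R part -> x \in Csub R part i -> x \in Csub R part j -> i = j.
Proof.
move=> hx hi hj; case: (eqVneq i j) => // hij; exfalso; move/negP: hx; apply.
rewrite /common inE; apply/existsP; exists i; apply/existsP; exists j.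
by rewrite hij hi hj.
Qed.

Theorem lemma1 (C : finType) (R : {set C * C}) (k : nat)
  (part : C * C -> 'I_k)
  (hdec : is_decomposition R part) (hpbs : PBS R part)
  (y1 y2 : C) (xs : seq C) :
  path (adj R) y1 (rcons xs y2) ->
  uniq (y1 :: rcons xs y2) ->
  y1 \in common R part -> y2 \in common R part ->
  all (fun x => x \notin common R part) xs ->
  exists i : 'I_k, connect (adj (Rsub R part i)) y1 y2.
Proof.
move=> hp _ _ _ hall.
suff [i [hc _]] : exists i, connect (adj (Rsub R part i)) y1 y2 /\ y1 \in Csub R part i.
  by exists i.
elim: xs y1 hp hall => [|x xs IH] y1 /=.
- rewrite andbT => he _.
  have [j [h1 h2 _]] := @edge_sub _ R k part _ _ he.
  by exists j; split => //; apply: connect1.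
- move=> /andP [he hp] /andP [hx hall].
  have [i [hc hxi]] := IH x hp hall.
  have [j [h1 h2 h3]] := @edge_sub _ R k part _ _ he.
  have eij := @noncommon_eq _ R k part _ _ _ hx hxi h3; subst j.
  exists i; split => //.
  by apply: connect_trans hc; apply: connect1.
Qed.
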